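(* Let $\mathscr{S}\subset\mathbb{Z}^2$ be a finite set defining a non-trivial quarter-plane model, let $\theta^*$ be as in the context, and assume $m=\tan\theta^*$ is irrational. Then the language $\mathcal{L}_m$ over the alphabet $\mathscr{S}$ consisting of the words (step sequences) whose associated walks from the origin lie in $\mathrm{walks}(H_{\theta^*},\mathscr{S})$ is not context-free.
   Context: $H_\theta=\{(x,y):x\sin\theta+y\cos\theta\ge0\}$; $\mathrm{walks}(C,\mathscr{S})$ is the set of walks $x_0=(0,0),x_1,\dots,x_n$ ($n\ge0$) with $x_{j+1}-x_j\in\mathscr{S}$ and all $x_i\in C$. With $h^{\mathscr{S}}_n(\theta)=|\mathrm{walks}(H_\theta,\mathscr{S},n)|$ and $\rho(\theta)^{-1}=\lim_n h^{\mathscr{S}}_n(\theta)^{1/n}$, set $\theta^*=\arg\max_{0\le\theta\le\pi/2}\rho(\theta)$. The projected steps are $\mathscr{A}(\theta)=\{i\sin\theta+j\cos\theta:(i,j)\in\mathscr{S}\}$. Non-triviality is used in the form: there exist steps whose projections $a\in\mathscr{A}(\theta^* )$, $-b\in\mathscr{A}(\theta^* )$ satisfy $a>0$, $b>0$ and $a/b$ irrational. *)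

(* Defs.v *)
From Stdlib Require Import Reals ZArith List.
Import ListNotations.
Open Scope R_scope.

Definition pt := (Z * Z)%type.

Definition padd (p q : pt) : pt := ((fst p + fst q)%Z, (snd p + snd q)%Z).

Definition proj (theta : R) (p : pt) : R :=
  IZR (fst p) * sin theta + IZR (snd p) * cos theta.

Definition inH (theta : R) (p : pt) : Prop := 0 <= proj theta p.

Fixpoint walk_in_H (theta : R) (pos : pt) (w : list pt) : Prop :=
  inH theta pos /\
  match w with
  | [] => True
  | s :: w' => walk_in_H theta (padd pos s) w'
  end.

Definition inHb (theta : R) (p : pt) : bool :=
  if Rle_dec 0 (proj theta p) then true else false.

Fixpoint walk_in_Hb (theta : R) (pos : pt) (w : list pt) : bool :=
  inHb theta pos &&
  match w with
  | [] => true
  | s :: w' => walk_in_Hb theta (padd pos s) w'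
  end.

Fixpoint words (S : list pt) (n : nat) : list (list pt) :=
  match n with
  | O => [ [] ]
  | Datatypes.S n' => flat_map (fun s => map (cons s) (words S n')) S
  end.

(** h_n^S(theta) = |walks(H_theta, S, n)|  (S given as a duplicate-free list). *)
Definition h (S : list pt) (theta : R) (n : nat) : nat :=
  length (filter (walk_in_Hb theta (0%Z, 0%Z)) (words S n)).

Definition nroot (x : R) (n : nat) : R :=
  if Rlt_dec 0 x then Rpower x (/ INR n) else 0.

(** [growth S theta g] : h_n(theta)^{1/n} -> g, i.e. g = rho(theta)^{-1}. *)
Definition growth (S : list pt) (theta : R) (g : R) : Prop :=
  Un_cv (fun n => nroot (INR (h S theta (Datatypes.S n))) (Datatypes.S n)) g.

Definition irrational (x : R) : Prop :=
  ~ exists p q : Z, q <> 0%Z /\ x = IZR p / IZR q.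

(** Context-free grammars over a terminal type T, nonterminals indexed by nat
    (a grammar has finitely many rules, hence finitely many nonterminals). *)
Record cfg (T : Type) := mkCfg {
  cfg_start : nat;
  cfg_rules : list (nat * list (nat + T))
}.
Arguments cfg_start {T} _.
Arguments cfg_rules {T} _.

Inductive gen {T : Type} (G : cfg T) : nat -> list T -> Prop :=
| gen_rule A rhs w :
    In (A, rhs) (cfg_rules G) -> gens G rhs w -> gen G A w
with gens {T : Type} (G : cfg T) : list (nat + T) -> list T -> Prop :=
| gens_nil : gens G [] []
| gens_term t r w : gens G r w -> gens G (inr t :: r) (t :: w)
| gens_nonterm B r w1 w2 :
    gen G B w1 -> gens G r w2 -> gens G (inl B :: r) (w1 ++ w2).

Definition language_of {T : Type} (G : cfg T) (w : list T) : Prop :=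
  gen G (cfg_start G) w.

Definition context_free {T : Type} (L : list T -> Prop) : Prop :=
  exists G : cfg T, forall w, language_of G w <-> L w.

Definition Lm (S : list pt) (theta : R) (w : list pt) : Prop :=
  (forall s, In s w -> In s S) /\ walk_in_H theta (0%Z, 0%Z) w.

(* Main.v *)
Require Import Defs.
From Stdlib Require Import Reals ZArith List Lia Lra Classical.
Import ListNotations.
Open Scope R_scope.

Scheme gen_mut := Induction for gen Sort Prop
with gens_mut := Induction for gens Sort Prop.

Fixpoint lpow {T} (l : list T) (i : nat) : list T :=
  match i with O => [] | Datatypes.S i' => l ++ lpow l i' end.

Lemma lpow_r {T} (l : list T) i : lpow l (Datatypes.S i) = lpow l i ++ l.
Proof. induction i; simpl. now rewrite app_nil_r. simpl in IHi. rewrite <- app_assoc; f_equal; exact IHi. Qed.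

Definition rules_nts {T} (G : cfg T) := map fst (cfg_rules G).
Definition mbound {T} (G : cfg T) : nat :=
  Datatypes.S (fold_right Nat.max 0%nat (map (fun r => length (snd r)) (cfg_rules G))).
Definition Kb {T} (G:cfg T) := (mbound G ^ Datatypes.S (length (rules_nts G)))%nat.

Definition Pump {T} (G : cfg T) A (w : list T) : Prop :=
  exists x y z t r, w = x ++ y ++ z ++ t ++ r /\ (1 <= length (y ++ t))%nat /\
   (length (y ++ z ++ t) <= Kb G)%nat /\
   forall i, gen G A (x ++ lpow y i ++ z ++ lpow t i ++ r).
Definition PumpS {T} (G : cfg T) rhs (w : list T) : Prop :=
  exists x y z t r, w = x ++ y ++ z ++ t ++ r /\ (1 <= length (y ++ t))%nat /\
   (length (y ++ z ++ t) <= Kb G)%nat /\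
   forall i, gens G rhs (x ++ lpow y i ++ z ++ lpow t i ++ r).

Definition Dc {T} (G:cfg T) A B (y t : list T) := forall z, gen G B z -> gen G A (y ++ z ++ t).
Definition Dsc {T} (G:cfg T) rhs B (y t : list T) := forall z, gen G B z -> gens G rhs (y ++ z ++ t).

Definition Pgen {T} (G : cfg T) A w : Prop :=
  Pump G A w \/
  exists P : list nat, NoDup P /\ incl P (rules_nts G) /\
    (length w <= mbound G ^ length P)%nat /\
    forall B, In B P -> exists y z t, w = y ++ z ++ t /\ Dc G A B y t /\ gen G B z.

Definition Pgens {T} (G : cfg T) rhs w : Prop :=
  PumpS G rhs w \/
  exists (P : list nat) (M : nat) (br : bool), NoDup P /\ incl P (rules_nts G) /\
    (M <= mbound G ^ length P)%nat /\ (length w <= length rhs * M)%nat /\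
    (br = false -> (length w <= M)%nat) /\
    forall B, In B P -> exists y z t, w = y ++ z ++ t /\ Dsc G rhs B y t /\ gen G B z /\
        (br = true -> (1 <= length (y ++ t))%nat).

Lemma rhs_bound {T} (G : cfg T) A rhs : In (A, rhs) (cfg_rules G) -> (length rhs < mbound G)%nat.
Proof.
  unfold mbound. induction (cfg_rules G) as [|[B r] l IH]; simpl; [tauto|].
  intros [E|E]; [inversion E; subst; lia| specialize (IH E); lia].
Qed.

Lemma iter_pump {T} (G : cfg T) A rhs y z t :
  In (A, rhs) (cfg_rules G) -> Dsc G rhs A y t -> gen G A z ->
  forall i, gen G A (lpow y i ++ z ++ lpow t i).
Proof.
  intros HA HD Hz i; induction i.
  - simpl. now rewrite app_nil_r.
  - assert (E : lpow y (Datatypes.S i) ++ z ++ lpow t (Datatypes.S i)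
               = y ++ (lpow y i ++ z ++ lpow t i) ++ t).
    { rewrite (lpow_r t i). simpl. now rewrite !app_assoc. }
    rewrite E. eapply gen_rule; [exact HA|]. exact (HD _ IHi).
Qed.

Lemma pow_mono m a b : (1 <= m)%nat -> (a <= b)%nat -> (m ^ a <= m ^ b)%nat.
Proof. intros. apply Nat.pow_le_mono_r; lia. Qed.

Lemma main_pump {T} (G : cfg T) A w : gen G A w -> Pgen G A w.
Proof.
  revert A w.
  apply (gen_mut T G (fun A w _ => Pgen G A w) (fun rhs w _ => Pgens G rhs w)).
  -
    intros A rhs w HA Hg [HP|(P & M & br & HND & Hinc & HM & Hw & Hbr & HB)].
    + left. destruct HP as (x&y&z&t&r&E&H1&H2&H3). exists x,y,z,t,r; repeat split; auto.
      intro i; eapply gen_rule; eauto.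
    + pose proof (rhs_bound G A rhs HA) as Hrb.
      assert (Hm1 : (1 <= mbound G)%nat) by (unfold mbound; lia).
      destruct br.
      * destruct (in_dec Nat.eq_dec A P) as [HAP|HAP].
        -- left. destruct (HB A HAP) as (y&z&t&E&HD&Hz&H1).
           exists [], y, z, t, []. subst w. repeat split.
           ++ simpl. now rewrite app_nil_r.
           ++ now apply H1.
           ++ assert (length P <= length (rules_nts G))%nat by (apply NoDup_incl_length; auto).
              unfold Kb. rewrite Nat.pow_succ_r'.
              pose proof (pow_mono (mbound G) _ _ Hm1 H).
              apply Nat.le_trans with (length rhs * M)%nat; [exact Hw|].
              apply Nat.mul_le_mono; lia.
           ++ intro i. simpl. rewrite app_nil_r. eapply iter_pump; eauto.
        -- right. exists (A :: P). repeat split.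
           ++ now constructor.
           ++ intros x [<-|Hx]; [|now apply Hinc].
              unfold rules_nts. change A with (fst (A, rhs)). now apply in_map.
           ++ simpl length. rewrite Nat.pow_succ_r'. apply Nat.le_trans with (length rhs * M)%nat; [exact Hw|].
              apply Nat.mul_le_mono; lia.
           ++ intros B [<-|HBP].
              ** exists [], w, []. repeat split.
                 --- simpl; now rewrite app_nil_r.
                 --- intros z Hz. simpl. now rewrite app_nil_r.
                 --- eapply gen_rule; eauto.
              ** destruct (HB B HBP) as (y&z&t&E&HD&Hz&_).
                 exists y, z, t. repeat split; auto.
                 intros z' Hz'. eapply gen_rule; eauto.
      * right. exists P. repeat split; auto.
        -- specialize (Hbr eq_refl). lia.
        -- intros B HBP. destruct (HB B HBP) as (y&z&t&E&HD&Hz&_).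
           exists y, z, t. repeat split; auto.
           intros z' Hz'. eapply gen_rule; eauto.
  -
    right. exists [], 0%nat, false. repeat split; simpl; try lia; try constructor; intros ? [].
  -
    intros t r w Hg [HP|(P & M & br & HND & Hinc & HM & Hw & Hbr & HB)].
    + left. destruct HP as (x&y&z&tt&rr&E&H1&H2&H3).
      exists (t :: x), y, z, tt, rr. subst w. repeat split; auto.
      intro i. simpl. now constructor.
    + right. destruct w as [|c w'].
      * exists [], 1%nat, false. repeat split; simpl; try lia; try constructor; intros ? [].
      * exists P, M, true. simpl in *. repeat split; auto.
        -- nia.
        -- discriminate.
        -- intros B HBP. destruct (HB B HBP) as (y&z&tt&E&HD&Hz&_).
           exists (t :: y), z, tt. repeat split; auto.
           ++ simpl. now rewrite E.
           ++ intros z' Hz'. simpl. constructor. now apply HD.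
           ++ intros _. simpl. lia.
  -
    intros B r w1 w2 g1 IH1 g2 IH2.
    destruct IH2 as [HP|(P2 & M2 & br2 & HND2 & Hinc2 & HM2 & Hw2 & Hbr2 & HB2)].
    { left. destruct HP as (x&y&z&tt&rr&E&H1&H2&H3).
      exists (w1 ++ x), y, z, tt, rr. subst w2. repeat split; auto.
      - now rewrite !app_assoc.
      - intro i. rewrite <- app_assoc. now constructor. }
    destruct IH1 as [HP|(P1 & HND1 & Hinc1 & Hw1 & HB1)].
    { left. destruct HP as (x&y&z&tt&rr&E&H1&H2&H3).
      exists x, y, z, tt, (rr ++ w2). subst w1. repeat split; auto.
      - now rewrite !app_assoc.
      - intro i.
        replace (x ++ lpow y i ++ z ++ lpow tt i ++ rr ++ w2)
          with ((x ++ lpow y i ++ z ++ lpow tt i ++ rr) ++ w2) by now rewrite !app_assoc.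
        now constructor. }
    right.
    destruct w1 as [|c1 w1'].
    { exists P2, M2, br2. simpl. repeat split; auto.
      - lia.
      - intros C HC. destruct (HB2 C HC) as (y&z&tt&E&HD&Hz&H1).
        exists y, z, tt. repeat split; auto.
        intros z' Hz'. change (y ++ z' ++ tt) with ([] ++ (y ++ z' ++ tt)). constructor; auto. }
    destruct w2 as [|c2 w2'].
    { exists P1, (length (c1 :: w1')), false. rewrite app_nil_r. repeat split; auto.
      - simpl; nia.
      - intros C HC. destruct (HB1 C HC) as (y&z&tt&E&HD&Hz).
        exists y, z, tt. repeat split; auto; try discriminate.
        intros z' Hz'. rewrite <- (app_nil_r (y ++ z' ++ tt)).
        constructor; auto. }
    set (w1 := c1 :: w1') in *. set (w2 := c2 :: w2') in *.
    destruct (le_lt_dec M2 (length w1)) as [Hle|Hlt].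
    + exists P1, (length w1), true. repeat split; auto.
      * rewrite length_app. change (length (inl B :: r)) with (Datatypes.S (length r)). nia.
      * discriminate.
      * intros C HC. destruct (HB1 C HC) as (y&z&tt&E&HD&Hz).
        exists y, z, (tt ++ w2). repeat split; auto.
        -- rewrite E. now rewrite !app_assoc.
        -- intros z' Hz'. replace (y ++ z' ++ tt ++ w2) with ((y ++ z' ++ tt) ++ w2)
             by now rewrite !app_assoc. constructor; auto.
        -- intros _. rewrite !length_app. subst w2; simpl; lia.
    + exists P2, M2, true. repeat split; auto.
      * rewrite length_app. change (length (inl B :: r)) with (Datatypes.S (length r)). nia.
      * discriminate.
      * intros C HC. destruct (HB2 C HC) as (y&z&tt&E&HD&Hz&_).
        exists (w1 ++ y), z, tt. repeat split; auto.
        -- rewrite E. now rewrite !app_assoc.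
        -- intros z' Hz'. rewrite <- app_assoc. constructor; auto.
        -- intros _. rewrite !length_app. subst w1; simpl; lia.
Qed.

Lemma pumping {T} (G : cfg T) w : language_of G w ->
  (mbound G ^ length (rules_nts G) < length w)%nat -> Pump G (cfg_start G) w.
Proof.
  intros H Hl. destruct (main_pump G _ _ H) as [HP|(P&HND&Hinc&Hw&_)]; auto.
  assert (length P <= length (rules_nts G))%nat by (apply NoDup_incl_length; auto).
  assert (1 <= mbound G)%nat by (unfold mbound; lia).
  pose proof (pow_mono (mbound G) _ _ H1 H0). lia.
Qed.


Lemma floorZ (z x : R) : 0 < x -> exists q : Z, IZR q * x <= z < IZR q * x + x.
Proof.
  intro Hx. destruct (archimed (z / x)) as [H1 H2].
  exists (up (z / x) - 1)%Z. rewrite minus_IZR.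
  assert (E : z = z / x * x) by (field; lra).
  split; nra.
Qed.

Lemma irr_nz (a b : R) (c d : nat) : 0 < a -> 0 < b -> irrational (a / b) ->
  (1 <= c + d)%nat -> INR c * a - INR d * b <> 0.
Proof.
  intros Ha Hb Hirr Hcd E.
  destruct c as [|c].
  - simpl in E. assert (0 < INR d) by (apply lt_0_INR; lia). nra.
  - apply Hirr. exists (Z.of_nat d), (Z.of_nat (Datatypes.S c)). split; [lia|].
    rewrite <- !INR_IZR_INZ.
    assert (0 < INR (Datatypes.S c)) by (apply lt_0_INR; lia).
    field_simplify_eq; [lra| lra].
Qed.

Definition Gs (a b x : R) := exists n k : Z, x = IZR n * a + IZR k * b.

Lemma small_elt (a b : R) : 0 < a -> 0 < b -> irrational (a / b) ->
  forall eps, 0 < eps -> exists n k : Z, 0 < IZR n * a + IZR k * b < eps.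
Proof.
  intros Ha Hb Hirr eps Heps.
  apply NNPP; intro Hno.
  assert (Hsep : forall x, Gs a b x -> ~ (0 < x < eps)).
  { intros x (n&k&->) Hx. apply Hno; eauto. }
  set (E := fun y => Gs a b (- y) /\ 0 < - y).
  assert (HEb : bound E) by (exists 0; intros y [_ Hy]; lra).
  assert (HEn : exists y, E y).
  { exists (- a). split; [exists 1%Z, 0%Z; simpl; ring| lra]. }
  destruct (completeness E HEb HEn) as [m [Hub Hlub]].
  assert (Hg0 : forall z, Gs a b z -> 0 < z -> - m <= z).
  { intros z Hz Hz0. assert (- z <= m); [|lra]. apply Hub. split; [now rewrite Ropp_involutive| lra]. }
  assert (Hx : exists x, Gs a b x /\ 0 < x /\ x < - m + eps).
  { apply NNPP; intro Hn. assert (m <= m - eps); [|lra].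
    apply Hlub. intros y [Hy Hy0]. apply NNPP; intro Hc.
    apply Hn. exists (- y). repeat split; auto; lra. }
  destruct Hx as (x & Gx & Hx0 & Hxm).
  assert (Hmul : forall z, Gs a b z -> exists q : Z, z = IZR q * x).
  { intros z Gz. destruct (floorZ z x Hx0) as [q Hq]. exists q.
    destruct (Req_dec (z - IZR q * x) 0) as [E0|E0]; [lra|].
    exfalso.
    assert (Gz' : Gs a b (z - IZR q * x)).
    { destruct Gz as (n1&k1&->). destruct Gx as (n2&k2&->).
      exists (n1 - q * n2)%Z, (k1 - q * k2)%Z. rewrite !minus_IZR, !mult_IZR. ring. }
    pose proof (Hg0 _ Gz' ltac:(lra)).
    apply (Hsep (x - (z - IZR q * x))).
    - destruct Gz' as (n1&k1&E1). destruct Gx as (n2&k2&E2).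
      exists (n2 - n1)%Z, (k2 - k1)%Z. rewrite E1. rewrite E2. rewrite !minus_IZR. ring.
    - lra. }
  destruct (Hmul a ltac:(exists 1%Z, 0%Z; simpl; ring)) as [q1 Hq1].
  destruct (Hmul b ltac:(exists 0%Z, 1%Z; simpl; ring)) as [q2 Hq2].
  apply Hirr. exists q1, q2.
  assert (q2 <> 0%Z) by (intro Hq; rewrite Hq in Hq2; simpl in Hq2; lra).
  assert (IZR q2 <> 0) by (apply not_0_IZR; auto).
  split; auto. rewrite Hq1, Hq2. field. split; lra.
Qed.

Lemma density (a b : R) : 0 < a -> 0 < b -> irrational (a / b) ->
  forall eta, 0 < eta -> forall N : nat,
  exists n k : nat, (N <= n)%nat /\ 0 <= INR n * a - INR k * b < eta.
Proof.
  intros Ha Hb Hirr eta Heta N.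
  destruct (small_elt a b Ha Hb Hirr (Rmin eta b)) as (n0 & k0 & Hg).
  { now apply Rmin_glb_lt. }
  set (g := IZR n0 * a + IZR k0 * b) in *.
  assert (Hgeta : g < eta) by (pose proof (Rmin_l eta b); lra).
  assert (Hgb : g < b) by (pose proof (Rmin_r eta b); lra).
  destruct (floorZ b g ltac:(lra)) as [J HJ].
  set (N1 := (Z.of_nat N + J * Z.abs n0)%Z).
  destruct (floorZ (IZR N1 * a) b Hb) as [K1 HK1].
  set (r := IZR N1 * a - IZR K1 * b).
  destruct (floorZ r g ltac:(lra)) as [j Hj].
  assert (HJ0 : (0 <= J)%Z).
  { assert (0 < IZR J + 1) by nra.
    destruct (Z.le_gt_cases 0 J) as [?|Hc]; [auto|exfalso]. assert (IZR J <= -1) by (apply IZR_le; lia). lra. }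
  assert (Hj0 : (0 <= j)%Z).
  { assert (0 < (IZR j + 1) * g) by (unfold r in Hj; nra).
    assert (0 < IZR j + 1) by nra.
    destruct (Z.le_gt_cases 0 j) as [?|Hc]; [auto|exfalso]. assert (IZR j <= -1) by (apply IZR_le; lia). lra. }
  assert (HjJ : (j <= J)%Z).
  { assert (IZR j * g < (IZR J + 1) * g) by (unfold r in Hj; nra).
    assert (IZR j < IZR J + 1) by nra.
    destruct (Z.le_gt_cases j J) as [?|Hc]; [auto|exfalso]. assert (IZR J + 1 <= IZR j) by (rewrite <- plus_IZR; apply IZR_le; lia). lra. }
  set (n := (N1 - j * n0)%Z). set (k := (K1 + j * k0)%Z).
  assert (Hval : IZR n * a - IZR k * b = r - IZR j * g).
  { unfold n, k, r, g. rewrite minus_IZR, plus_IZR, !mult_IZR. ring. }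
  assert (HnN : (Z.of_nat N <= n)%Z).
  { unfold n, N1. assert (j * n0 <= J * Z.abs n0)%Z; [|lia].
    destruct (Z.abs_spec n0) as [[? ->]|[? ->]]; nia. }
  assert (Hk0 : (0 <= k)%Z).
  { assert (0 <= IZR n) by (apply IZR_le; lia).
    assert (- b < IZR k * b) by nra.
    assert (-1 < IZR k) by nra.
    destruct (Z.le_gt_cases 0 k) as [?|Hc]; [auto|exfalso]. assert (IZR k <= -1) by (apply IZR_le; lia). lra. }
  exists (Z.to_nat n), (Z.to_nat k). split; [lia|].
  rewrite !INR_IZR_INZ, !Z2Nat.id by lia.
  rewrite Hval. lra.
Qed.

Lemma finmin (Q : nat -> R -> Prop) (K : nat) :
  (forall i d d', Q i d -> 0 < d' <= d -> Q i d') ->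
  (forall i, (i <= K)%nat -> exists d, 0 < d /\ Q i d) ->
  exists d, 0 < d /\ forall i, (i <= K)%nat -> Q i d.
Proof.
  intros Hmono. induction K as [|K IH]; intros H.
  - destruct (H 0%nat (le_n _)) as (d & Hd & HQ). exists d; split; auto.
    intros i Hi. replace i with 0%nat by lia. auto.
  - destruct IH as (d1 & Hd1 & HQ1). { intros i Hi. apply H. lia. }
    destruct (H (Datatypes.S K) (le_n _)) as (d2 & Hd2 & HQ2).
    exists (Rmin d1 d2). split; [now apply Rmin_glb_lt|].
    intros i Hi. destruct (Nat.eq_dec i (Datatypes.S K)) as [->|Hne].
    + eapply Hmono; [exact HQ2|]. split; [now apply Rmin_glb_lt| apply Rmin_r].
    + eapply Hmono; [apply HQ1; lia|]. split; [now apply Rmin_glb_lt| apply Rmin_l].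
Qed.

Lemma delta_exists (a b : R) (K : nat) : 0 < a -> 0 < b -> irrational (a / b) ->
  exists d, 0 < d /\ forall c e, (c <= K)%nat -> (e <= K)%nat -> (1 <= c + e)%nat ->
     d <= Rabs (INR c * a - INR e * b).
Proof.
  intros Ha Hb Hirr.
  destruct (finmin (fun c d => forall e, (e <= K)%nat -> (1 <= c + e)%nat ->
     d <= Rabs (INR c * a - INR e * b)) K) as (d & Hd & HQ).
  - intros i d d' H1 H2 e He Hce. specialize (H1 e He Hce). lra.
  - intros c Hc.
    destruct (finmin (fun e d => (1 <= c + e)%nat -> d <= Rabs (INR c * a - INR e * b)) K)
      as (d & Hd & HQ).
    + intros i d d' H1 H2 Hce. specialize (H1 Hce). lra.
    + intros e He. destruct (le_lt_dec 1 (c + e)) as [Hce|Hce].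
      * exists (Rabs (INR c * a - INR e * b)).
        split; [apply Rabs_pos_lt; now apply irr_nz| intros _; lra].
      * exists 1. split; [lra|]. intro; lia.
    + exists d. split; auto.
  - exists d. split; auto.
Qed.


Definition sp (th : R) (l : list pt) : R := fold_right (fun s acc => proj th s + acc) 0 l.

Lemma sp_app th l1 l2 : sp th (l1 ++ l2) = sp th l1 + sp th l2.
Proof. induction l1; simpl; [ring| rewrite IHl1; ring]. Qed.

Lemma sp_lpow th l i : sp th (lpow l i) = INR i * sp th l.
Proof. induction i; simpl lpow; [simpl; ring|]. rewrite sp_app, IHi, S_INR. ring. Qed.

Lemma sp_repeat th s n : sp th (repeat s n) = INR n * proj th s.
Proof. induction n; simpl repeat; [simpl; ring|]. simpl sp. fold (sp th (repeat s n)). rewrite IHn, S_INR. ring. Qed.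

Lemma proj_padd th p q : proj th (padd p q) = proj th p + proj th q.
Proof. unfold proj, padd; simpl. rewrite !plus_IZR. ring. Qed.

Lemma proj0 th : proj th (0%Z, 0%Z) = 0.
Proof. unfold proj; simpl. ring. Qed.

Lemma walk_final th pos w : walk_in_H th pos w -> 0 <= proj th pos + sp th w.
Proof.
  revert pos; induction w as [|s w IH]; intros pos [H1 H2]; simpl.
  - unfold inH in H1. lra.
  - specialize (IH _ H2). rewrite proj_padd in IH. fold (sp th w). lra.
Qed.

Lemma walk_v th pos v k : proj th v <= 0 ->
  0 <= proj th pos + INR k * proj th v -> walk_in_H th pos (repeat v k).
Proof.
  revert pos; induction k as [|k IH]; intros pos Hv H; simpl.
  - split; auto. unfold inH. simpl in H. lra.
  - split.
    + unfold inH. rewrite S_INR in H.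
      assert (0 <= INR k) by apply pos_INR. nra.
    + apply IH; auto. rewrite proj_padd. rewrite S_INR in H. lra.
Qed.

Lemma walk_uv th pos u v n k : 0 < proj th u -> proj th v <= 0 -> 0 <= proj th pos ->
  0 <= proj th pos + INR n * proj th u + INR k * proj th v ->
  walk_in_H th pos (repeat u n ++ repeat v k).
Proof.
  revert pos; induction n as [|n IH]; intros pos Hu Hv Hp H; simpl.
  - apply walk_v; auto. simpl in H. lra.
  - split; [exact Hp|]. apply IH; auto; rewrite proj_padd; [lra|]. rewrite S_INR in H. lra.
Qed.

Lemma sp_uv th u v l : (forall s, In s l -> s = u \/ s = v) ->
  exists c d : nat, (c + d = length l)%nat /\ sp th l = INR c * proj th u + INR d * proj th v.
Proof.
  induction l as [|s l IH]; intro H.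
  - exists 0%nat, 0%nat. split; auto. simpl. ring.
  - destruct IH as (c & d & E1 & E2). { intros x Hx. apply H. now right. }
    simpl sp. fold (sp th l). rewrite E2.
    destruct (H s (or_introl eq_refl)) as [->| ->].
    + exists (Datatypes.S c), d. split; [simpl; lia|]. rewrite S_INR. ring.
    + exists c, (Datatypes.S d). split; [simpl; lia|]. rewrite S_INR. ring.
Qed.

Theorem mainTheorem6
  (S : list pt) (HS : NoDup S)
  (thstar gstar : R)
  (Hth : 0 <= thstar <= PI / 2)
  (* rho(thstar)^{-1} = gstar exists *)
  (Hgstar : growth S thstar gstar)
  (* thstar maximises rho on [0, pi/2], i.e. minimises rho^{-1} *)
  (Hmax : forall theta g, 0 <= theta <= PI / 2 -> growth S theta g -> gstar <= g)
  (* non-triviality (in the form used in the paper) *)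
  (Hnontriv : exists u v, In u S /\ In v S /\
      0 < proj thstar u /\ 0 < - proj thstar v /\
      irrational (proj thstar u / (- proj thstar v)))
  (* m = tan thstar is (finite and) irrational *)
  (Hm : cos thstar <> 0 /\ irrational (tan thstar)) :
  ~ context_free (Lm S thstar).
Proof.
  destruct Hnontriv as (u & v & HuS & HvS & Ha & Hb & Hirr).
  set (a := proj thstar u) in *. set (b := - proj thstar v) in *.
  intros [G HG].
  destruct (delta_exists a b (Kb G) Ha Hb Hirr) as (d & Hd & Hdel).
  destruct (density a b Ha Hb Hirr d Hd (Datatypes.S (mbound G ^ length (rules_nts G))))
    as (n & k & HnN & HE).
  set (w0 := repeat u n ++ repeat v k).
  assert (Hw0 : Lm S thstar w0).
  { split.
    - intros s Hs. apply in_app_or in Hs as [Hs|Hs]; apply repeat_spec in Hs; subst; auto.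
    - assert (Hv : proj thstar v = - b) by (unfold b; ring).
      apply walk_uv; rewrite ?proj0, ?Hv; fold a; lra. }
  assert (Hsp0 : sp thstar w0 = INR n * a - INR k * b).
  { unfold w0. rewrite sp_app, !sp_repeat. fold a. unfold b. ring. }
  apply HG in Hw0.
  assert (Hlen : (mbound G ^ length (rules_nts G) < length w0)%nat).
  { unfold w0. rewrite length_app, !repeat_length. lia. }
  destruct (pumping G w0 Hw0 Hlen) as (x & y & z & t & r & Ew & H1 & H2 & H3).
  assert (Hyt : forall s, In s (y ++ t) -> s = u \/ s = v).
  { intros s Hs.
    assert (In s w0).
    { rewrite Ew. apply in_app_or in Hs as [Hs|Hs]; apply in_or_app; right;
        [apply in_or_app; now left|].
      apply in_or_app; right. apply in_or_app; right. apply in_or_app; now left. }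
    unfold w0 in H. apply in_app_or in H as [Hs'|Hs']; apply repeat_spec in Hs'; auto. }
  destruct (sp_uv thstar u v _ Hyt) as (c & e & Hce & Hspyt).
  fold a in Hspyt. replace (proj thstar v) with (- b) in Hspyt by (unfold b; ring).
  rewrite length_app in H1. rewrite !length_app in H2. rewrite length_app in Hce.
  specialize (Hdel c e ltac:(lia) ltac:(lia) ltac:(lia)).
  rewrite sp_app in Hspyt.
  assert (Hspw : sp thstar w0 = sp thstar x + sp thstar y + sp thstar z + sp thstar t + sp thstar r).
  { rewrite Ew, !sp_app. ring. }
  assert (Hbad : forall i, 0 <= INR i * (sp thstar y + sp thstar t) + sp thstar x + sp thstar z + sp thstar r).
  { intro i. specialize (H3 i). apply HG in H3. destruct H3 as [_ H3].
    apply walk_final in H3.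
    rewrite proj0 in H3.
    rewrite !sp_app, !sp_lpow in H3. lra. }
  destruct (Rle_or_lt 0 (INR c * a - INR e * b)) as [Hpos|Hneg].
  - rewrite Rabs_right in Hdel by lra.
    specialize (Hbad 0%nat). simpl INR in Hbad. lra.
  - rewrite Rabs_left in Hdel by lra.
    specialize (Hbad 2%nat). replace (INR 2) with 2 in Hbad by (simpl; ring). lra.
Qed.
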